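(* Among all $(G,\phi,\tau)$ with $G\in\Gamma(F)$, $\phi=(\phi_t,\phi_d)$ with $\phi_d=0$, satisfying (w-P) and (w-HE), the objective $\phi_t+\phi_d(1-G(\tau))$ is maximized by the test-fee structure $(F,\phi)$ with $\phi_d=0$ and $\phi_t=\int_{\mu}^{\overline{\theta}}[s-\mu]\,dF(s)$; that is, this test-fee structure is robustly optimal among all test-fee structures with zero disclosure fee.
   Context: $F$ is a distribution of the asset value with lowest and highest support points $0\le\underline{\theta}<\overline{\theta}<\infty$ and mean $\mu$. $\Gamma(F)$ is the set of CDFs $G$ supported in $[\underline{\theta},\overline{\theta}]$ with $\int_{\underline{\theta}}^xG\le\int_{\underline{\theta}}^xF$ for all $x$ and equality at $x=\overline{\theta}$ (score distributions of unbiased tests). A test-fee structure is $(G,\phi)$ with $G\in\Gamma(F)$ and fees $\phi=(\phi_t,\phi_d)$ (testing, disclosure). (w-P): $\phi_t\le\int_{\mu+\phi_d}^{\overline{\theta}}[s-(\mu+\phi_d)]dG(s)$. (w-HE) for threshold $\tau$: $\tau-\phi_d=E_G[s\mid s\le\tau]$ and $\tau'-\phi_d\ge E_G[s\mid s\le\tau']$ for all $\tau'>\tau$. *)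

(* Defs.v *)
From HB Require Import structures.
From mathcomp Require Import all_boot all_order all_algebra.
From mathcomp Require Import all_classical all_reals all_analysis.
Set Implicit Arguments. Unset Strict Implicit. Unset Printing Implicit Defensive.
Import Order.TTheory GRing.Theory Num.Theory.
Local Open Scope classical_set_scope.
Local Open Scope ring_scope.

Section Defs.
Variable R : realType.
Notation distr := (probability R R).

Definition cdfP (G : distr) (x : R) : R := fine (G [set` `]-oo, x]]).

Definition support_bounds (F : distr) (lo hi : R) : Prop :=
  F [set` `[lo, hi]] = 1%E /\
  (forall e : R, 0 < e -> (0 < F [set` `[lo, (lo + e)%R[])%E) /\
  (forall e : R, 0 < e -> (0 < F [set` `](hi - e)%R, hi]])%E).

Definition meanP (G : distr) : R := fine (\int[G]_s (s%:E)).

Definition intcdf (G : distr) (lo x : R) : \bar R :=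
  (\int[lebesgue_measure]_(y in `[lo, x]) (cdfP G y)%:E)%E.

Definition inGamma (F : distr) (lo hi : R) (G : distr) : Prop :=
  G [set` `[lo, hi]] = 1%E /\
  (forall x : R, (intcdf G lo x <= intcdf F lo x)%E) /\
  intcdf G lo hi = intcdf F lo hi.

(* fees phi = (phi_t, phi_d) *)
Definition fees := (R * R)%type.

(* (w-P) with mu the mean of F *)
Definition wP (mu hi : R) (G : distr) (phi : fees) : Prop :=
  (phi.1%:E <= \int[G]_(s in `[(mu + phi.2)%R, hi]) (s - (mu + phi.2))%:E)%E.

(* E_G[s | s <= t]; convention: t when G(t) = 0 *)
Definition condexp_le (G : distr) (t : R) : R :=
  if cdfP G t == 0 then t
  else fine (\int[G]_(s in `]-oo, t]) s%:E) / cdfP G t.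

Definition wHE (lo hi : R) (G : distr) (phi : fees) (tau : R) : Prop :=
  lo <= tau <= hi /\
  tau - phi.2 = condexp_le G tau /\
  (forall tau', tau < tau' -> tau' - phi.2 >= condexp_le G tau').

Definition objective (G : distr) (phi : fees) (tau : R) : R :=
  phi.1 + phi.2 * (1 - cdfP G tau).

End Defs.

(* Main.v *)
Set Warnings "-all".
Require Import Defs.
From HB Require Import structures.
From mathcomp Require Import all_boot all_order all_algebra.
From mathcomp Require Import all_classical all_reals all_analysis.
From mathcomp Require Import measurable_realfun.
From mathcomp Require Import lra.
Import Order.TTheory GRing.Theory Num.Theory.
Local Open Scope classical_set_scope.
Local Open Scope ring_scope.

Section aux.
Variable R : realType.
Implicit Types P : probability R R.

Lemma cdfPE P x : (cdfP P x)%:E = P [set` `]-oo, x]].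
Proof. by rewrite /cdfP fineK // fin_num_measure. Qed.

Lemma cdfP_ge0 P x : 0 <= cdfP P x.
Proof. by rewrite -lee_fin cdfPE measure_ge0. Qed.

Lemma cdfP_le1 P x : cdfP P x <= 1.
Proof. by rewrite -lee_fin cdfPE probability_le1. Qed.

Lemma cdfP_nd P : nondecreasing_fun (cdfP P).
Proof.
move=> x y xy; rewrite -lee_fin !cdfPE; apply: le_measure; rewrite ?inE //.
by apply: subset_itvl; rewrite bnd_simp.
Qed.

Lemma cdfP_meas P (D : set R) : measurable D -> measurable_fun D (cdfP P).
Proof. by move=> mD; apply: nondecreasing_measurable => //; exact: cdfP_nd. Qed.

Lemma cdfP_emeas P (D : set R) : measurable D -> measurable_fun D (fun x => (cdfP P x)%:E).
Proof. by move=> mD; apply/measurable_EFinP; exact: cdfP_meas. Qed.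

Lemma null_out P lo hi : P [set` `[lo, hi]] = 1%E -> P (~` [set` `[lo, hi]]) = 0%E.
Proof. by move=> H; rewrite probability_setC // H subee. Qed.

Lemma P_le_hi P lo hi : P [set` `[lo, hi]] = 1%E -> P [set` `]-oo, hi]] = 1%E.
Proof.
move=> H; apply/eqP; rewrite eq_le probability_le1 //= -H; apply: le_measure; rewrite ?inE //.
by move=> x /=; rewrite !in_itv /= => /andP[].
Qed.
Local Notation leb := (@lebesgue_measure R).

Lemma layer P m hi : m <= hi -> P [set` `]-oo, hi]] = 1%E ->
  (\int[P]_(s in [set` `[m, hi]]) (s - m)%:E =
   \int[leb]_(y in [set` `[m, hi]]) (1 - cdfP P y)%:E)%E.
Proof.
move=> mhi Phi.
pose S : set (R * R) := [set z | (m <= z.2) && (z.2 < z.1) && (z.1 <= hi)].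
have mS : measurable S.
  have h : measurable_fun setT (fun z : R * R => (m <= z.2) && (z.2 < z.1) && (z.1 <= hi)).
    apply: measurable_and; first apply: measurable_and.
    - exact: measurable_fun_ler.
    - exact: measurable_fun_ltr.
    - exact: measurable_fun_ler.
  by move: (h measurableT [set true]); rewrite setTI; apply.
transitivity (\int[P]_s \int[leb]_y (\1_S (s, y))%:E)%E.
  rewrite integral_mkcond; apply: eq_integral => s _; symmetry.
  transitivity (\int[leb]_y (\1_(if s <= hi then [set` `[m, s[] else set0) y)%:E)%E.
    apply: eq_integral => y _; congr EFin; rewrite !indicE; congr ((nat_of_bool _)%:R).
    rewrite /S; case: ifP => shi.
      apply/idP/idP => /set_mem /=.
        by move=> /andP[H _]; apply/mem_set; rewrite /= in_itv.
      by rewrite /= in_itv /= => H; apply/mem_set; rewrite /= H shi.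
    by rewrite in_set0; apply/negbTE/negP => /set_mem /= /andP[_]; rewrite shi.
  rewrite integral_indic //; last by case: ifP.
  rewrite setIT patchE; case: ifP => shi.
    etransitivity; first exact: lebesgue_measure_itv.
    rewrite /= lte_fin.
    case: (ltP m s) => ms.
      by rewrite mem_set //= in_itv /= (ltW ms) shi.
    case: ifP => [H|_]; last first. reflexivity.
    move/set_mem: H; rewrite /= in_itv /= => /andP[ms' _].
    have -> : s = m by apply/le_anti; rewrite ms ms'.
    by rewrite subrr.
  rewrite measure0 memNset; first reflexivity.
  by rewrite /= in_itv /= shi andbF.
transitivity (\int[leb]_y \int[P]_s (\1_S (s, y))%:E)%E.
  apply: (@fubini_tonelli _ _ _ _ _ P leb (fun z => (\1_S z)%:E)).
  - by apply/measurable_EFinP; exact: measurable_indic.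
  - by move=> z; rewrite lee_fin.
rewrite [RHS]integral_mkcond; apply: eq_integral => y _.
transitivity (\int[P]_s (\1_(if m <= y then [set` `]y, hi]] else set0) s)%:E)%E.
  apply: eq_integral => s _; congr EFin; rewrite !indicE; congr ((nat_of_bool _)%:R).
  rewrite /S; case: ifP => my.
    apply/idP/idP => /set_mem /=.
      by move=> /andP[/andP[_ ys] sh]; apply/mem_set; rewrite /= in_itv /= ys sh.
    by rewrite /= in_itv /= => /andP[ys sh]; apply/mem_set; rewrite /= my ys sh.
  by rewrite in_set0; apply/negbTE/negP => /set_mem /= /andP[/andP[]]; rewrite my.
rewrite integral_indic //; last by case: ifP.
rewrite setIT patchE; case: ifP => my.
  case: ifP => Hy.
    move/set_mem: Hy; rewrite /= in_itv /= => /andP[_ yh].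
    have -> : [set` `]y, hi]] = [set` `]-oo, hi]] `\` [set` `]-oo, y]].
      apply/seteqP; split => x /=; rewrite !in_itv /=.
        by move=> /andP[yx xh]; split => //; apply/negP; rewrite -ltNge.
      by move=> [xh /negP]; rewrite -ltNge => yx; rewrite yx xh.
    rewrite measureD //; last by rewrite ltey_eq fin_num_measure.
    transitivity (1 - P [set` `]-oo, y]])%E; last by rewrite EFinB cdfPE.
    congr (_ - _)%E; first exact: Phi.
    by rewrite setIidr //; apply: subset_itvl; rewrite bnd_simp.
  rewrite set_itv_ge; first by transitivity (0 : \bar R)%E; [exact: measure0 | reflexivity].
  rewrite bnd_simp; apply/negP => yh.
  by move: Hy; rewrite mem_set // /= in_itv /= my (ltW yh).
rewrite memNset; first by transitivity (0 : \bar R)%E; [exact: measure0 | reflexivity].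
by rewrite /= in_itv /= my.
Qed.

Lemma cint_ge0 P a b : (0 <= \int[leb]_(y in [set` `[a, b]]) (cdfP P y)%:E)%E.
Proof. by apply: integral_ge0 => y _; rewrite lee_fin cdfP_ge0. Qed.

Lemma cint_fin P a b : (\int[leb]_(y in [set` `[a, b]]) (cdfP P y)%:E)%E \is a fin_num.
Proof.
rewrite ge0_fin_numE ?cint_ge0 //.
apply: (@le_lt_trans _ _ (\int[leb]_(y in [set` `[a, b]]) (cst 1%:E) y)%E).
  apply: ge0_le_integral => //.
  - by move=> y _; rewrite lee_fin cdfP_ge0.
  - exact: cdfP_emeas.
  - by move=> y _; rewrite lee_fin cdfP_le1.
rewrite integral_cst // mul1e.
have := lebesgue_measure_itv `[a, b]; rewrite /= => ->.
by case: ifP => _; rewrite ?ltry.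
Qed.

Lemma total P m hi : m <= hi -> P [set` `]-oo, hi]] = 1%E ->
  (\int[P]_(s in [set` `[m, hi]]) (s - m)%:E +
   \int[leb]_(y in [set` `[m, hi]]) (cdfP P y)%:E = (hi - m)%:E)%E.
Proof.
move=> mhi Phi; rewrite layer // -ge0_integralD //; first last.
- exact: cdfP_emeas.
- by move=> y _; rewrite lee_fin cdfP_ge0.
- by apply/measurable_EFinP; apply: measurable_funB => //; exact: cdfP_meas.
- by move=> y _; rewrite lee_fin subr_ge0 cdfP_le1.
transitivity (\int[leb]_(y in [set` `[m, hi]]) (cst 1%:E) y)%E.
  by apply: eq_integral => y _; rewrite -EFinD subrK.
rewrite integral_cst // mul1e.
have := lebesgue_measure_itv `[m, hi]; rewrite /= => ->.
rewrite lte_fin; case: ltP => // hm.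
have -> : m = hi by apply/le_anti; rewrite mhi hm.
by rewrite subrr.
Qed.

Lemma split_int P lo m hi : lo <= m -> m <= hi ->
  intcdf P lo hi = (intcdf P lo m + \int[leb]_(y in [set` `[m, hi]]) (cdfP P y)%:E)%E.
Proof.
move=> lm mh; rewrite /intcdf.
rewrite (@itv_bndbnd_setU _ _ (BLeft lo) (BLeft m) (BRight hi)); last 2 first.
- by rewrite bnd_simp.
- by rewrite bnd_simp.
rewrite ge0_integral_setU //.
- by rewrite integral_itv_bndo_bndc //; exact: cdfP_emeas.
- by apply: cdfP_emeas; apply: measurableU.
- by move=> y _; rewrite lee_fin cdfP_ge0.
- apply: lt_disjoint => x y; rewrite !in_itv /= => /andP[_ xm] /andP[my _].
  exact: lt_le_trans xm my.
Qed.

Lemma aP_fin P m hi : m <= hi -> P [set` `]-oo, hi]] = 1%E ->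
  (\int[P]_(s in [set` `[m, hi]]) (s - m)%:E)%E \is a fin_num.
Proof.
move=> mh Ph; have t := @total P m hi mh Ph.
have cf := cint_fin P m hi.
have -> : (\int[P]_(s in [set` `[m, hi]]) (s - m)%:E)%E =
   ((hi - m)%:E - \int[leb]_(y in [set` `[m, hi]]) (cdfP P y)%:E)%E.
  by rewrite -t addeK.
by rewrite fin_numB cf.
Qed.

Lemma key (F G : probability R R) lo m hi : lo <= m -> m <= hi ->
  F [set` `]-oo, hi]] = 1%E -> G [set` `]-oo, hi]] = 1%E ->
  (intcdf G lo m <= intcdf F lo m)%E -> intcdf G lo hi = intcdf F lo hi ->
  (\int[G]_(s in [set` `[m, hi]]) (s - m)%:E <= \int[F]_(s in [set` `[m, hi]]) (s - m)%:E)%E.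
Proof.
move=> lm mh Fh Gh hle heq.
have tG := @total G m hi mh Gh; have tF := @total F m hi mh Fh.
have sG := @split_int G lo m hi lm mh; have sF := @split_int F lo m hi lm mh.
have cGf := cint_fin G m hi; have cFf := cint_fin F m hi.
have iGf := cint_fin G lo m; have iFf := cint_fin F lo m.
rewrite -/(intcdf G lo m) in iGf; rewrite -/(intcdf F lo m) in iFf.
have -> : (\int[G]_(s in [set` `[m, hi]]) (s - m)%:E)%E =
   ((hi - m)%:E - \int[leb]_(y in [set` `[m, hi]]) (cdfP G y)%:E)%E.
  by rewrite -tG addeK.
have -> : (\int[F]_(s in [set` `[m, hi]]) (s - m)%:E)%E =
   ((hi - m)%:E - \int[leb]_(y in [set` `[m, hi]]) (cdfP F y)%:E)%E.
  by rewrite -tF addeK.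
move: sG sF hle heq.
rewrite -(fineK cGf) -(fineK cFf) -(fineK iGf) -(fineK iFf).
move: (fine _) (fine _) (fine _) (fine _) => a b c d.
move=> -> -> h1 h2; apply: leeB => //; rewrite lee_fin.
have h3 : d + c = b + a by apply: EFin_inj; rewrite !EFinD.
move: h1; rewrite lee_fin => h1.
lra.
Qed.

Definition clamp (lo hi x : R) := Num.min (Num.max x lo) hi.

Lemma clamp_nd lo hi : nondecreasing_fun (clamp lo hi).
Proof. by move=> x y xy; rewrite /clamp le_min2 // le_max2. Qed.

Lemma clamp_id lo hi x : lo <= x <= hi -> clamp lo hi x = x.
Proof.
move=> /andP[lx xh]; rewrite /clamp.
have -> : Num.max x lo = x by apply/max_idPl.
by apply/min_idPl.
Qed.

Lemma clamp_int P lo hi (D : set R) : measurable D -> P [set` `[lo, hi]] = 1%E ->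
  (\int[P]_(s in D) s%:E = \int[P]_(s in D) (clamp lo hi s)%:E)%E.
Proof.
move=> mD Pl.
apply: ae_eq_integral => //.
- by apply/measurable_EFinP; apply: nondecreasing_measurable => //; exact: clamp_nd.
exists (~` [set` `[lo, hi]]); split.
- by apply: measurableC.
- exact: null_out.
move=> x /= H Hx; apply: H => _.
by rewrite clamp_id.
Qed.

Lemma fin_between (x : \bar R) a b : (a%:E <= x)%E -> (x <= b%:E)%E -> x \is a fin_num.
Proof.
move=> h1 h2; apply: fin_real; apply/andP; split.
- exact: (lt_le_trans (ltNyr a) h1).
- exact: (le_lt_trans h2 (ltry b)).
Qed.

Lemma mean_in (F : probability R R) lo hi : 0 <= lo -> lo <= hi -> F [set` `[lo, hi]] = 1%E ->
  lo <= meanP F <= hi.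
Proof.
move=> l0 lh Fl; rewrite /meanP (@clamp_int F lo hi setT) //.
set I := (\int[F]_x _)%E.
have mc : measurable_fun setT (fun x => (clamp lo hi x)%:E).
  by apply/measurable_EFinP; apply: nondecreasing_measurable => //; exact: clamp_nd.
have cl x : lo <= clamp lo hi x <= hi.
  rewrite /clamp; apply/andP; split.
    by rewrite le_min lh andbT le_max lexx orbT.
  by rewrite ge_min lexx orbT.
have h1 : (lo%:E <= I)%E.
  rewrite -[X in (X <= _)%E]mule1 -(@probability_setT _ _ _ F) -integral_cst //.
  apply: ge0_le_integral => //.
  by move=> x _; rewrite /= lee_fin; case/andP: (cl x) => a b.
have h2 : (I <= hi%:E)%E.
  rewrite -[X in (_ <= X)%E]mule1 -(@probability_setT _ _ _ F) -integral_cst //.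
  apply: ge0_le_integral => //.
  - by move=> x _; rewrite lee_fin; case/andP: (cl x) => a _; apply: le_trans a.
  - by move=> x _; rewrite /= lee_fin; case/andP: (cl x) => a b.
have If := @fin_between I lo hi h1 h2.
by rewrite -!lee_fin fineK // h1 h2.
Qed.

Lemma condexp_lo (F : probability R R) lo hi : lo <= hi -> F [set` `[lo, hi]] = 1%E ->
  condexp_le F lo = lo.
Proof.
move=> lh Fl; rewrite /condexp_le; case: ifP => // c0.
rewrite (@clamp_int F lo hi) //.
transitivity (fine (\int[F]_(s in [set` `]-oo, lo]]) (cst lo%:E) s)%E / cdfP F lo).
  congr (fine _ / _); apply: eq_integral => s.
  rewrite inE /= in_itv /= => sl; congr EFin; rewrite /clamp.
  have -> : Num.max s lo = lo by apply/max_idPr.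
  by apply/min_idPl.
rewrite integral_cst //.
rewrite [X in (_ * X)%E](_ : _ = (cdfP F lo)%:E); last exact: (esym (cdfPE F lo)).
by rewrite -EFinM /= mulfK // c0.
Qed.

Lemma condexp_gt (F : probability R R) lo hi t : 0 <= lo -> lo < t -> lo <= hi ->
  F [set` `[lo, hi]] = 1%E -> condexp_le F t <= t.
Proof.
move=> l0 lt lh Fl; rewrite /condexp_le; case: ifP => // c0.
have cpos : 0 < cdfP F t by rewrite lt_def c0 cdfP_ge0.
rewrite ler_pdivrMr //.
rewrite (@clamp_int F lo hi) //.
set I := (\int[F]_(s in _) _)%E.
have h1 : (0%:E <= I)%E.
  apply: integral_ge0 => x _; rewrite lee_fin /clamp le_min.
  by rewrite le_max l0 orbT (le_trans l0 lh).
have h2 : (I <= (t * cdfP F t)%:E)%E.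
  rewrite EFinM (cdfPE F t) -integral_cst //.
  apply: ge0_le_integral => //.
  - move=> x _; rewrite lee_fin /clamp le_min.
    by rewrite le_max l0 orbT (le_trans l0 lh).
  - by apply/measurable_EFinP; apply: nondecreasing_measurable => //; exact: clamp_nd.
  - move=> x; rewrite /= in_itv /= => xt; rewrite lee_fin /clamp ge_min.
    by rewrite ge_max xt (ltW lt).
have If := @fin_between I _ _ h1 h2.
by rewrite -lee_fin fineK.
Qed.
End aux.

Theorem lemma10 (R : realType) (F : probability R R) (lo hi : R) :
  0 <= lo -> lo < hi -> support_bounds F lo hi ->
  let mu := meanP F in
  let phi_star : fees R :=
    (fine (\int[F]_(s in `[mu, hi]) (s - mu)%:E)%E, 0) in
  [/\ inGamma F lo hi F,
      wP mu hi F phi_star,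
      (exists tau, wHE lo hi F phi_star tau) &
      forall (G : probability R R) (phi : fees R) (tau tau0 : R),
        inGamma F lo hi G -> phi.2 = 0 ->
        wP mu hi G phi -> wHE lo hi G phi tau ->
        wHE lo hi F phi_star tau0 ->
        objective G phi tau <= objective F phi_star tau0].
Proof.
move=> l0 lh [Fl _]; intros mu phi_star.
have Fh := @P_le_hi R F lo hi Fl.
have /andP[lm mh] : lo <= mu <= hi by exact: (@mean_in R F lo hi l0 (ltW lh) Fl).
have aFf := @aP_fin R F mu hi mh Fh.
split.
- by split => //; split => // x.
- by rewrite /wP /= addr0 fineK.
- exists lo; split; first by rewrite lexx (ltW lh).
  split; first by rewrite /= subr0 (@condexp_lo R F lo hi (ltW lh) Fl).
  move=> t' lt'; rewrite /= subr0.
  exact: (@condexp_gt R F lo hi t' l0 lt' (ltW lh) Fl).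
move=> G phi tau tau0 [Gl [Gle Geq]] p2 wp _ _.
rewrite /objective p2 /= !mul0r !addr0.
move: wp; rewrite /wP p2 addr0 => wp.
have Gh := @P_le_hi R G lo hi Gl.
have := @key R F G lo mu hi lm mh Fh Gh (Gle mu) Geq.
rewrite -lee_fin fineK // => H.
exact: le_trans wp H.
Qed.
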